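(* Let the switch times returned by Algorithm 1 (described in the context) be $(t_k,t_{k-1},\dots,t_1)$ with $t_k<\dots<t_1$. Then for any feasible switch time sequence $(t'_{k'},t'_{k'-1},\dots,t'_1)$ we have $t_i\le t'_i$ for all $i$ with $1\le i\le\min(k,k')$.
   Context: Let $\mathcal{S}=\{s^{(1)},\dots,s^{(n)}\}$ and $\mathcal{A}=\{a^{(1)},\dots,a^{(m)}\}$ be finite sets, $\mathcal{T}:\mathcal{S}\times\mathcal{A}\to\Delta(\mathcal{S})$ a Markov transition kernel, $\gamma\in[0,1]$, and $T\ge1$ an integer horizon. Let $\pi^{\mathrm{E}}=(\pi^{\mathrm{E}}_t)_{t=0}^{T-1}$ be a time-varying policy with each $\pi^{\mathrm{E}}_t(\cdot|s)$ a probability distribution on $\mathcal{A}$ and $\pi^{\mathrm{E}}_t(a|s)\in(0,1]$. For $k=1,\dots,m$ let $P_{a^{(k)}}\in\mathbb{R}^{n\times n}$ have $(i,j)$ entry $\mathcal{T}(s^{(j)}|s^{(i)},a^{(k)})$, $\mathbf{P}=\begin{bmatrix}P_{a^{(1)}}^\top&\cdots&P_{a^{(m)}}^\top\end{bmatrix}^\top\in\mathbb{R}^{mn\times n}$, $\mathbf{E}=\mathbf{1}_m\otimes\mathbf{I}_n$. For each $t$ let $\pi^{\log}_t\in\mathbb{R}^{mn}$ have entry $\log\pi^{\mathrm{E}}_t(a^{(k)}|s^{(i)})$ in position $(k-1)n+i$. Define $\mathcal{R}^{\mathrm{E}}$ as the set of pairs $(r,\nu)$, $r=(r_0,\dots,r_{T-1})$,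 $r_t\in\mathbb{R}^{mn}$, $\nu=(\nu_0,\dots,\nu_{T-1})$, $\nu_t\in\mathbb{R}^n$, such that $r_t-\mathbf{E}\nu_t+\gamma\mathbf{P}\nu_{t+1}=\pi^{\log}_t$ for $0\le t\le T-1$, with $\nu_T:=0$. A feasible switch time sequence is a sequence of integers $T>t'_1>t'_2>\dots>t'_{k'}>0$ such that, with $t'_0=T$ and $t'_{k'+1}=0$, there exists $(r,\nu)\in\mathcal{R}^{\mathrm{E}}$ with $r_t$ constant for $t$ in each interval $t'_{i+1}\le t<t'_i$, $i=0,\dots,k'$. For integers $0\le i<j\le T$ and $\nu_o\in\mathbb{R}^n$, let $\mathcal{R}^{\mathrm{inv}}_{i:j}(\nu_o)$ be the set of tuples $(\bar r,\nu_i,\dots,\nu_{j-1})$ with $\bar r\in\mathbb{R}^{mn}$, $\nu_l\in\mathbb{R}^n$, such that $\bar r-\mathbf{E}\nu_l+\gamma\mathbf{P}\nu_{l+1}=\pi^{\log}_l$ for $l=i,\dots,j-1$, where $\nu_j:=\nu_o$. By convention $\mathcal{R}^{\mathrm{inv}}_{-1:j}(\nu_o)=\emptyset$. Algorithm 1 (Greedy Interval Partitioning), input $T,\mathbf{P},\pi^{\mathrm{E}}$: set $Z\leftarrow()$, $R\leftarrow()$, $V_t\leftarrow0\in\mathbb{R}^n$ for $0\le t\le T$; $l\leftarrow-1$, $u\leftarrow T$, $j\leftarrow T-1$, $\tau\leftarrow T$. While $j\ge0$: if $\mathcal{R}^{\mathrm{inv}}_{j:\tau}(V_\tau)\ne\emptyset$,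 set $u\leftarrow j$ and pick some $(\bar r,\bar\nu)\in\mathcal{R}^{\mathrm{inv}}_{j:\tau}(V_\tau)$; otherwise set $l\leftarrow j$, and if moreover $u=l+1$, prepend $u$ to $Z$ and $\bar r$ to $R$, set $V_t\leftarrow\bar\nu_t$ for $t\in[u,\tau-1]$, $\tau\leftarrow u$, $l\leftarrow-1$. In either case then set $j\leftarrow\lfloor(l+u)/2\rfloor$. After the loop, prepend $\bar r$ to $R$, set $V_t\leftarrow\bar\nu_t$ for $t\in[0,\tau-1]$, and return $Z$ (switch times) and $R$. *)

(* Defs.v *)
From mathcomp Require Import all_boot all_order all_algebra.
From mathcomp Require Import reals exp.
Set Implicit Arguments.
Unset Strict Implicit.
Unset Printing Implicit Defensive.
Import Order.TTheory GRing.Theory Num.Theory.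
Local Open Scope ring_scope.

Section Setting.
Variable R : realType.
Variables (n m : nat).
(* states s^(i+1) ~ i : 'I_n, actions a^(k+1) ~ k : 'I_m (0-based).
   Tr i k j = T(s^(j) | s^(i), a^(k)); piE t i k = pi^E_t(a^(k) | s^(i)). *)
Variable Tr : 'I_n -> 'I_m -> 'I_n -> R.
Variable gamma : R.
Variable T : nat.
Variable piE : nat -> 'I_n -> 'I_m -> R.

(* position (k-1)n+i of R^{mn}, 0-based: mxvec_index k i (= k*n+i). *)
Definition Pmat : 'M[R]_(m * n, n) :=
  \matrix_(p < m * n, j < n) mxvec (\matrix_(k < m, i < n) Tr i k j) 0 p.
(* E = 1_m (x) I_n *)
Definition Emat : 'M[R]_(m * n, n) :=
  \matrix_(p < m * n, j < n) mxvec (\matrix_(k < m, i < n) (i == j)%:R) 0 p.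
Definition pilog (t : nat) : 'cV[R]_(m * n) :=
  (mxvec (\matrix_(k < m, i < n) ln (piE t i k)))^T.

(* R^E : pairs (r, nu), nu_T := 0 *)
Definition in_RE (r : nat -> 'cV[R]_(m * n)) (nu : nat -> 'cV[R]_n) : Prop :=
  forall t, (t < T)%N ->
    r t - Emat *m nu t + gamma *: (Pmat *m (if t.+1 == T then 0 else nu t.+1))
    = pilog t.

(* Feasible switch time sequence, given as the list [:: t'_1; ...; t'_k'] *)
Definition feasible_switch (s : seq nat) : Prop :=
  sorted gtn s /\ all (fun x => (0 < x < T)%N) s /\
  let b := T :: rcons s 0%N in
  exists r nu, in_RE r nu /\
    forall i, (i <= size s)%N -> forall t1 t2,
      (nth 0 b i.+1 <= t1 < nth 0 b i)%N -> (nth 0 b i.+1 <= t2 < nth 0 b i)%N ->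
      r t1 = r t2.

(* R^inv_{i:j}(nuo): (rbar, nu_i, ..., nu_{j-1}) with nu_j := nuo *)
Definition Rinv (i j : nat) (nuo : 'cV[R]_n) (rbar : 'cV[R]_(m * n))
    (nu : nat -> 'cV[R]_n) : Prop :=
  forall l, (i <= l < j)%N ->
    rbar - Emat *m nu l + gamma *: (Pmat *m (if l.+1 == j then nuo else nu l.+1))
    = pilog l.

Definition Rinv_nonempty (i j : nat) (nuo : 'cV[R]_n) : Prop :=
  exists rbar nu, Rinv i j nuo rbar nu.

(* State of Algorithm 1. (rb, nb) = last picked (rbar, nubar), nb indexed by
   absolute time. *)
Record alg_state := AlgState {
  st_Z : seq int; st_R : seq 'cV[R]_(m * n); st_V : nat -> 'cV[R]_n;
  st_l : int; st_u : int; st_j : int; st_tau : int;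
  st_rb : 'cV[R]_(m * n); st_nb : nat -> 'cV[R]_n }.

Definition alg_init : alg_state :=
  AlgState [::] [::] (fun _ => 0) (-1) T%:Z (T%:Z - 1) T%:Z 0 (fun _ => 0).

(* one iteration of the while loop (nondeterministic in the pick) *)
Inductive alg_step : alg_state -> alg_state -> Prop :=
| step_nonempty Z Rs V l u j tau rb nb rb' nb' :
    (0 <= j) ->
    Rinv `|j|%N `|tau|%N (V `|tau|%N) rb' nb' ->
    alg_step (AlgState Z Rs V l u j tau rb nb)
             (AlgState Z Rs V l j ((l + j) %/ 2)%Z tau rb' nb')
| step_empty_nocommit Z Rs V l u j tau rb nb :
    (0 <= j) ->
    ~ Rinv_nonempty `|j|%N `|tau|%N (V `|tau|%N) ->
    u != j + 1 ->
    alg_step (AlgState Z Rs V l u j tau rb nb)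
             (AlgState Z Rs V j u ((j + u) %/ 2)%Z tau rb nb)
| step_empty_commit Z Rs V l u j tau rb nb :
    (0 <= j) ->
    ~ Rinv_nonempty `|j|%N `|tau|%N (V `|tau|%N) ->
    u = j + 1 ->
    alg_step (AlgState Z Rs V l u j tau rb nb)
             (AlgState (u :: Z) (rb :: Rs)
                (fun t => if (u <= t%:Z) && (t%:Z <= tau - 1) then nb t else V t)
                (-1) u ((-1 + u) %/ 2)%Z u rb nb).

Inductive alg_reaches : alg_state -> alg_state -> Prop :=
| reach_refl s : alg_reaches s s
| reach_step s1 s2 s3 : alg_step s1 s2 -> alg_reaches s2 s3 -> alg_reaches s1 s3.

(* Algorithm 1 may return switch times Z (as the list built by prepending)
   and rewards Rout. *)
Definition alg_returns (Z : seq int) (Rout : seq 'cV[R]_(m * n)) : Prop :=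
  exists s, alg_reaches alg_init s /\ st_j s < 0 /\
    Z = st_Z s /\ Rout = st_rb s :: st_R s.

End Setting.

Definition transition_kernel (R : realType) n m (Tr : 'I_n -> 'I_m -> 'I_n -> R) :=
  forall i k, (forall j, 0 <= Tr i k j) /\ \sum_(j < n) Tr i k j = 1.
Definition expert_policy (R : realType) n m (T : nat) (piE : nat -> 'I_n -> 'I_m -> R) :=
  forall t, (t < T)%N -> forall i,
    (forall k, 0 < piE t i k <= 1) /\ \sum_(k < m) piE t i k = 1.

(* Main.v *)
Require Import Defs.
From mathcomp Require Import all_boot all_order all_algebra.
From mathcomp Require Import reals exp.
Import Order.TTheory GRing.Theory Num.Theory.
Local Open Scope ring_scope.

Lemma zmod_aux (V : zmodType) (x e f p q : V) :
  (x + f - p) - (e + f) + (q + p) = x - e + q.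
Proof.
rewrite (addrAC x f) opprD (addrA (x - p + f)) (addrAC (x - p) f) addrK.
by rewrite (addrAC x (-p)) (addrC q p) addrA subrK.
Qed.

Definition inv (R : realType) (n m : nat) (Tr : 'I_n -> 'I_m -> 'I_n -> R)
    (gamma : R) (T : nat) (piE : nat -> 'I_n -> 'I_m -> R)
    (st : alg_state R n m) : Prop :=
  exists L : seq nat, st_Z st = map Posz (rev L) /\
    st_tau st = (last T L)%:Z /\
    forall i, (i < size L)%N -> exists V,
      ~ Rinv_nonempty Tr gamma piE (nth 0%N L i).-1 (nth T (T :: L) i) V.

Arguments inv {R n m}.

Lemma inv_reach (R : realType) (n m : nat) (Tr : 'I_n -> 'I_m -> 'I_n -> R)
    (gamma : R) (T : nat) (piE : nat -> 'I_n -> 'I_m -> R) s1 s2 :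
  alg_reaches Tr gamma piE s1 s2 -> inv Tr gamma T piE s1 -> inv Tr gamma T piE s2.
Proof.
elim=> // {}s1 {}s2 s3 Hst _ IH Hi; apply: IH; move: Hi.
case: Hst => {s1 s2}.
- by move=> Z Rs V l u j tau rb nb rb' nb' _ _ [L [HZ [Ht HL]]]; exists L.
- by move=> Z Rs V l u j tau rb nb _ _ _ [L [HZ [Ht HL]]]; exists L.
move=> Z Rs V l u j tau rb nb j0 Hne Hu [L [/= HZ [/= Ht HL]]].
have Hj : (`|j|%N)%:Z = j by rewrite gez0_abs.
have Hu' : u = (`|j|%N.+1)%:Z by rewrite Hu -Hj -addn1 PoszD.
exists (rcons L (`|j|%N).+1); split; last split.
- by rewrite /= rev_rcons /= HZ Hu'.
- by rewrite /= last_rcons Hu'.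
move=> i; rewrite size_rcons ltnS leq_eqVlt => /orP [/eqP ->|Hi].
  exists (V `|tau|%N).
  rewrite nth_rcons ltnn eqxx /=.
  have -> : nth T (T :: rcons L (`|j|%N).+1) (size L) = last T L.
    by rewrite -rcons_cons nth_rcons /= ltnS leqnn (last_nth T).
  by move: Hne; rewrite Ht.
have [V0 HV0] := HL i Hi; exists V0.
rewrite nth_rcons Hi.
have -> : nth T (T :: rcons L (`|j|%N).+1) i = nth T (T :: L) i.
  by rewrite -rcons_cons nth_rcons /= ltnS (ltnW Hi).
exact: HV0.
Qed.

Lemma main_nat (R : realType) (n m : nat) (Tr : 'I_n -> 'I_m -> 'I_n -> R)
    (gamma : R) (T : nat) (piE : nat -> 'I_n -> 'I_m -> R) (L s : seq nat) :
  (forall i, (i < size L)%N -> exists V,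
      ~ Rinv_nonempty Tr gamma piE (nth 0%N L i).-1 (nth T (T :: L) i) V) ->
  feasible_switch Tr gamma T piE s ->
  forall i, (i < size L)%N -> (i < size s)%N -> (nth 0%N L i <= nth 0%N s i)%N.
Proof.
move=> HL [_ [Hall [r [nu [HRE Hc]]]]].
have Hb0 : forall i, (i <= size s)%N ->
    nth 0%N (T :: rcons s 0%N) i = nth T (T :: s) i.
  case=> // k /= Hk; rewrite nth_rcons Hk; exact: set_nth_default.
have HbT : forall i, (i <= size s)%N -> (nth T (T :: s) i <= T)%N.
  case=> // k /= Hk.
  have /allP/(_ (nth T s k)) := Hall.
  by rewrite mem_nth // => /(_ isT) /andP [_ /ltnW].
have step : forall i, (i < size L)%N -> (i < size s)%N ->
    (nth T (T :: L) i <= nth T (T :: s) i)%N -> (nth 0%N L i <= nth 0%N s i)%N.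
  move=> i HiL His Hbb; rewrite leqNgt; apply/negP => Hlt.
  have [V HV] := HL i HiL; apply: HV.
  set b := nth T (T :: L) i. set b' := nth T (T :: s) i.
  set si := nth 0%N s i. set a := nth 0%N L i.
  have Hb'T : (b' <= T)%N by apply: HbT; exact: ltnW.
  have Hseg : forall l, (si <= l < b')%N -> r l = r si.
    move=> l Hl; have := Hc i (ltnW His) l si.
    rewrite (Hb0 i (ltnW His)) /= nth_rcons His => H.
    apply: H => //; rewrite leqnn /=; case/andP: Hl => Hl1 Hl2.
    exact: leq_ltn_trans Hl1 Hl2.
  pose nu' l := if l == T then 0 else nu l.
  pose phi := V - nu' b.
  exists (r si + @Emat R n m *m phi - gamma *: (Pmat Tr *m phi)).
  exists (fun l => nu' l + phi).
  move=> l /andP [Hl1 Hl2].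
  have HlT : (l < T)%N by apply: leq_trans Hl2 (leq_trans Hbb Hb'T).
  have -> : (if l.+1 == b then V else nu' l.+1 + phi) = nu' l.+1 + phi.
    case: eqP => // ->; by rewrite /phi addrC subrK.
  have := HRE l HlT.
  have Hsa : (si <= a.-1)%N by rewrite -ltnS (ltn_predK Hlt).
  have -> : r l = r si.
    apply: Hseg; rewrite (leq_trans Hsa Hl1) /=.
    exact: leq_trans Hl2 Hbb.
  rewrite /nu' (ltn_eqF HlT) => <-.
  by rewrite !mulmxDr !scalerDr zmod_aux.
elim=> [|k IH] HiL His.
  by apply: step => //.
apply: step => //=.
rewrite (set_nth_default 0%N) ?(ltnW HiL) // (set_nth_default 0%N T) ?(ltnW His) //.
exact: IH (ltnW HiL) (ltnW His).
Qed.

(* Z = [:: t_k; ...; t_1] (as returned), so rev Z = [:: t_1; ...; t_k];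
   s = [:: t'_1; ...; t'_k']. *)
Theorem lemma3 (R : realType) (n m : nat) (Tr : 'I_n -> 'I_m -> 'I_n -> R)
    (gamma : R) (T : nat) (piE : nat -> 'I_n -> 'I_m -> R) :
  transition_kernel Tr -> 0 <= gamma <= 1 -> (1 <= T)%N -> expert_policy T piE ->
  forall (Z : seq int) (Rout : seq 'cV[R]_(m * n)),
    alg_returns Tr gamma T piE Z Rout ->
  forall s : seq nat, feasible_switch Tr gamma T piE s ->
  forall i, (i < minn (size Z) (size s))%N -> nth 0 (rev Z) i <= (nth 0%N s i)%:Z.
Proof.
move=> _ _ _ _ Z Rout [st [Hr [_ [HZ _]]]] s Hf i.
have [L [HZ' [_ HL]]] : inv Tr gamma T piE st.
  apply: (@inv_reach R n m Tr gamma T piE _ _ Hr); exists [::]; split => //.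
rewrite HZ HZ' size_map size_rev leq_min => /andP [HiL His].
rewrite map_rev revK (nth_map 0%N) // lez_nat.
exact: main_nat HL Hf i HiL His.
Qed.
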